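(* Let $\varepsilon>0$, $r\ge2$ an integer and $a>0$ be constants, and let $p=d/\binom{n-1}{r-1}$. Fix $S\subseteq[n]$ with $|S|\le a\left(\frac{\log d}{d}\right)^{1/(r-1)}n$. If $d$ is sufficiently large in terms of $\varepsilon,r,a$, then with probability $1-\exp(-\Omega(n))$ there is no independent set $T$ of $\mathcal{H}_r(n,p)$ with $|T\cap S|\ge\varepsilon\left(\frac{\log d}{d}\right)^{1/(r-1)}n$.
   Context: $\mathcal{H}_r(n,p)$: random $r$-uniform hypergraph on $[n]$, each $r$-subset an edge independently with probability $p$. An independent set is a vertex set containing no edge. *)

(* Defs.v *)
From HB Require Import structures.
From mathcomp Require Import all_boot all_order all_algebra.
From mathcomp Require Import all_classical all_reals all_analysis.
Set Implicit Arguments. Unset Strict Implicit. Unset Printing Implicit Defensive.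
Import Order.TTheory GRing.Theory Num.Theory.
Local Open Scope ring_scope.

Definition redges (n r : nat) : {set {set 'I_n}} := [set e : {set 'I_n} | #|e| == r].

Definition independent (n : nat) (E : {set {set 'I_n}}) (T : {set 'I_n}) : bool :=
  [forall e in E, ~~ (e \subset T)].

(* Probability that H_r(n,p) (edge set E, each r-subset independently present with
   probability p) satisfies the event P. *)
Definition hprob (R : realType) (n r : nat) (p : R) (P : pred {set {set 'I_n}}) : R :=
  \sum_(E : {set {set 'I_n}} | (E \subset redges n r) && P E)
     p ^+ #|E| * (1 - p) ^+ (#|redges n r| - #|E|).

(* Main.v *)
Require Import Defs.
From HB Require Import structures.
From mathcomp Require Import all_boot all_order all_algebra.
From mathcomp Require Import all_classical all_reals all_analysis.
From mathcomp Require Import ring lra zify.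
Import Order.TTheory GRing.Theory Num.Theory.
Local Open Scope ring_scope.

Lemma weight_ge0 (R : realType) (p : R) (N m : nat) : 0 <= p -> p <= 1 ->
  0 <= p ^+ N * (1 - p) ^+ m.
Proof. by move=> p0 p1; rewrite mulr_ge0 // exprn_ge0 // subr_ge0. Qed.

Lemma hprob_union (R : realType) n r (p : R) (P : pred {set {set 'I_n}})
  (I : finType) (A : pred I) (Q : I -> pred {set {set 'I_n}}) :
  0 <= p -> p <= 1 ->
  (forall E : {set {set 'I_n}}, E \subset redges n r -> P E -> exists2 U, A U & Q U E) ->
  @hprob R n r p P <= \sum_(U | A U) @hprob R n r p (Q U).
Proof.
move=> p0 p1 HPQ; rewrite /hprob.
under [in X in _ <= X]eq_bigr do rewrite big_mkcond.
rewrite exchange_big /= big_mkcond /=.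
apply: ler_sum => E _.
case: ifP => [/andP[EN PE]|_].
  have [U AU QUE] := HPQ E EN PE.
  rewrite (bigD1 U) //= EN QUE /= lerDl.
  by apply: sumr_ge0 => i _; case: ifP => // _; apply: weight_ge0.
by apply: sumr_ge0 => i _; case: ifP => // _; apply: weight_ge0.
Qed.

Lemma hprob_disj (R : realType) n r (p : R) (F : {set {set 'I_n}}) :
  F \subset redges n r ->
  @hprob R n r p (fun E => [disjoint E & F]) = (1 - p) ^+ #|F|.
Proof.
move=> FN.
set N := redges n r; set G := N :\: F.
pose f i := if i \in G then p else 0.
pose g i := if i \in N then 1 - p else 1.
have H1 : \prod_i (f i + g i) = (1 - p) ^+ #|F|.
  rewrite (bigID (mem F)) /=.
  rewrite (eq_bigr (fun _ => 1 - p)); last first.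
    move=> i iF; rewrite /f /g (fintype.subsetP FN i iF) !inE iF /= add0r //.
  rewrite prodr_const big1 ?mulr1 // => i /negPf iF.
  rewrite /f /g !inE iF /=; case: ifP => _; [by rewrite addrC subrK | by rewrite add0r].
have H2 : \sum_(J : {set {set 'I_n}}) \prod_i (if i \in J then f i else g i) = (1 - p) ^+ #|F|.
  by rewrite -H1 bigA_distr.
rewrite (bigID (fun J : {set {set 'I_n}} => J \subset G)) /= in H2.
rewrite /hprob -H2.
rewrite [X in _ = _ + X]big1 ?addr0; last first.
  move=> J /fintype.subsetPn [i iJ iG].
  by rewrite (bigD1 i) //= iJ /f (negPf iG) mul0r.
apply: eq_big => [E|E EG].
  rewrite /G finset.setDE finset.subsetI; congr (_ && _).
  by rewrite finset.disjoints_subset.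
symmetry.
have {}EG : E \subset G by rewrite /G finset.setDE finset.subsetI -finset.disjoints_subset.
rewrite (bigID (mem E)) /=.
rewrite (eq_bigr (fun _ => p)); last first.
  by move=> i iE; rewrite iE /f (fintype.subsetP EG i iE).
rewrite prodr_const; congr (_ * _).
rewrite (eq_bigr g); last by move=> i /negPf ->.
rewrite (bigID (mem N)) /= [X in _ * X]big1 ?mulr1; last first.
  by move=> i /andP[_ /negPf iN]; rewrite /g iN.
rewrite (eq_bigl (fun i => i \in N :\: E)); last first.
  by move=> i; rewrite !inE andbC.
rewrite (eq_bigr (fun _ => 1 - p)); last by move=> i; rewrite finset.in_setD => /andP[_ iN]; rewrite /g iN.
rewrite prodr_const cardsD; congr (_ ^+ (_ - _)).
rewrite (finset.setIidPr _) //.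
by apply: (fintype.subset_trans EG); rewrite /G finset.subsetDl.
Qed.

Lemma ffact_lb (m j : nat) : ((m - j) ^ j <= m ^_ j)%N.
Proof.
elim: j m => [|j IH] m; first by rewrite expn0 ffactn0.
rewrite ffactnS expnS; apply: leq_mul; first exact: leq_subr.
by rewrite subnS -subn1 subnAC subn1; apply: IH.
Qed.

Lemma ffact_ub (m j : nat) : (m ^_ j <= m ^ j)%N.
Proof.
elim: j m => [|j IH] m; first by rewrite expn0 ffactn0.
rewrite ffactnS expnS leq_mul2l; apply/orP; right.
apply: leq_trans (IH _) _; case: (j) => [|k]; [by rewrite !expn0 | by rewrite leq_exp2r // leq_pred].
Qed.

Lemma card_F n r (U : {set 'I_n}) :
  #|[set e in redges n r | e \subset U]| = 'C(#|U|, r).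
Proof.
rewrite -cards_draws; apply: eq_card => e; rewrite !inE andbC //.
Qed.

Lemma nat_facts (t1 t2 r' n : nat) : (t1 + t2 + r'.+1 + 2 <= n)%N ->
  [/\ (t1.+1 <= n - r'.+1)%N, (t2.+1 <= n)%N, (0 < n)%N,
      (n.-1 - r' = n - r'.+1)%N & (0 < n - r'.+1)%N].
Proof. move=> h; split; lia. Qed.

Lemma key_bound (R : realType) (d eps w K : R) (n u r' : nat) :
  0 < d -> 0 < eps -> 0 < w -> (0 < n)%N ->
  K = (eps / 2) ^+ r'.+1 / r'.+1%:R ->
  ln d = d * w ^+ r' ->
  0 < ('C(n.-1, r'))%:R :> R ->
  ('C(n.-1, r') * r'`! <= n ^ r')%N ->
  2 * r'.+1%:R <= eps * w * n%:R ->
  eps * w * n%:R <= u%:R ->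
  K * ln d * (w * n%:R) <= d / ('C(n.-1, r'))%:R * ('C(u, r'.+1))%:R.
Proof.
move=> d0 e0 w0 n0 -> lnE Cn0 hCn hw2 hu.
set Cn : R := ('C(n.-1, r'))%:R in Cn0 *.
set Cu : R := ('C(u, r'.+1))%:R.
set f : R := (r'`!)%:R.
set Y : R := n%:R ^+ r'.
set X : R := (eps * w * n%:R / 2) ^+ r'.+1.
have f0 : 0 < f by rewrite ltr0n fact_gt0.
have nR0 : 0 < n%:R :> R by rewrite ltr0n.
have Y0 : 0 < Y by rewrite exprn_gt0.
have hY : Cn * f <= Y by rewrite /Y /Cn /f -natrM -natrX ler_nat.
have ru : (r'.+1 <= u)%N.
  rewrite -(ler_nat R); apply: le_trans hu; apply: le_trans hw2.
  rewrite ler_pMl ?ltr0n // ler1n //.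
have hX : X <= Cu * (r'.+1%:R * f).
  rewrite /Cu /f -!natrM -factS bin_ffact.
  apply: le_trans (_ : ((u - r'.+1) ^ r'.+1)%:R <= _); last by rewrite ler_nat ffact_lb.
  have hx0 : 0 <= eps * w * n%:R / 2 by rewrite divr_ge0 // !mulr_ge0 // ltW.
  rewrite natrX /X; apply: lerXn2r; [exact: hx0 | exact: ler0n |].
  rewrite natrB //; lra.
have e1 : (eps / 2) ^+ r'.+1 / r'.+1%:R * ln d * (w * n%:R) = d * X / (r'.+1%:R * Y).
  rewrite lnE /X /Y !exprMn !exprS.
  have nr0 : n%:R ^+ r' != 0 :> R by rewrite expf_neq0 // gt_eqF.
  field; rewrite nr0 gt_eqF //= pnatr_eq0 //.
rewrite e1 ler_pdivrMr ?mulr_gt0 ?ltr0n //.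
apply: le_trans (ler_wpM2l (ltW d0) hX) _.
have -> : d / Cn * Cu * (r'.+1%:R * Y) = d * (Cu * (r'.+1%:R * (Y / Cn))).
  by field; rewrite gt_eqF.
rewrite ler_wpM2l ?(ltW d0) // ler_wpM2l ?ler0n // ler_wpM2l ?ler0n //.
by rewrite ler_pdivlMr // mulrC.
Qed.

Theorem mainTheorem14 (R : realType) (eps : R) (r : nat) (a : R) :
  0 < eps -> (2 <= r)%N -> 0 < a ->
  exists d0 : R, forall d : R, d0 <= d ->
  exists c : R, 0 < c /\
  exists n0 : nat, forall n : nat, (n0 <= n)%N ->
  forall S : {set 'I_n},
    let p := d / ('C(n.-1, r.-1))%:R in
    let w := powR (ln d / d) (r.-1%:R)^-1 in
    (#|S|%:R <= a * w * n%:R) ->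
    @hprob R n r p (fun E => [exists T : {set 'I_n},
                             independent E T && (eps * w * n%:R <= #|T :&: S|%:R)])
      <= expR (- (c * n%:R)).
Proof.
move=> e0 hr a0.
case: r hr => [|r'] // hr.
have r'0 : (0 < r')%N by [].
set K : R := (eps / 2) ^+ r'.+1 / r'.+1%:R.
have K0 : 0 < K by rewrite divr_gt0 ?ltr0n // exprn_gt0 // divr_gt0.
exists (expR ((a + 1) / K)) => d hd.
have x0 : 0 < (a + 1) / K by rewrite divr_gt0 // addr_gt0.
have d1 : 1 < d.
  apply: lt_le_trans hd; apply: lt_le_trans (expR_ge1Dx _).
  by rewrite ltrDl.
have d0 : 0 < d by apply: lt_trans d1.
have lnd : (a + 1) / K <= ln d.
  by rewrite -(expRK ((a + 1) / K)) ler_ln // posrE expR_gt0.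
set L := ln d / d.
have L0 : 0 < L by rewrite divr_gt0 // ln_gt0.
rewrite /=.
set w := powR L (r'%:R)^-1.
have w0 : 0 < w by rewrite powR_gt0.
have hw : w ^+ r' = L.
  rewrite -powR_mulrn ?powR_ge0 // -powRrM mulVf ?powRr1 ?ltW //.
  by rewrite pnatr_eq0 -lt0n.
have lnE : ln d = d * w ^+ r' by rewrite hw /L mulrC divfK // gt_eqF.
exists w; split => //.
exists (Num.truncn (d * (r'`!)%:R) + Num.truncn (2 * r'.+1%:R / (eps * w)) + r'.+1 + 2)%N.
move=> n hn S hS.
set f : R := (r'`!)%:R.
have f0 : 0 < f by rewrite ltr0n fact_gt0.
have ht1 := Num.Theory.truncnS_gt (d * f).
have ht2 := Num.Theory.truncnS_gt (2 * r'.+1%:R / (eps * w)).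
have [hn1 hn2 n0 hsub hpos] := @nat_facts _ _ _ _ hn.
have hCn_lb : (n - r'.+1 <= 'C(n.-1, r') * r'`!)%N.
  rewrite bin_ffact; apply: leq_trans (ffact_lb _ _).
  by rewrite hsub -{1}(expn1 (n - r'.+1)) leq_pexp2l.
have hCn : ('C(n.-1, r') * r'`! <= n ^ r')%N.
  rewrite bin_ffact; apply: leq_trans (ffact_ub _ _) _.
  by rewrite leq_exp2r // leq_pred.
set Cn : R := ('C(n.-1, r'))%:R.
have hdC : d * f < Cn * f.
  apply: lt_le_trans ht1 _; apply: le_trans (_ : (n - r'.+1)%:R <= _).
    by rewrite ler_nat.
  by rewrite /Cn /f -natrM ler_nat.
have dC : d < Cn by rewrite -(ltr_pM2r f0).
have Cn0 : 0 < Cn by apply: lt_trans dC.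
set p := d / Cn.
have p0 : 0 <= p by rewrite divr_ge0 // ltW.
have p1 : p <= 1 by rewrite ler_pdivrMr // mul1r ltW.
have hw2 : 2 * r'.+1%:R <= eps * w * n%:R.
  have : 2 * r'.+1%:R / (eps * w) <= n%:R.
    by apply: ltW; apply: lt_le_trans ht2 _; rewrite ler_nat.
  rewrite ler_pdivrMr ?mulr_gt0 // => h; apply: le_trans h _; by rewrite [X in X <= _]mulrC.
apply: le_trans (@hprob_union R n r'.+1 p _ _
   (fun U : {set 'I_n} => (U \subset S) && (eps * w * n%:R <= #|U|%:R))
   (fun U E => [disjoint E & [set e in redges n r'.+1 | e \subset U]]) p0 p1 _) _.
  move=> E EN /existsP[T /andP[indT hT]]; exists (T :&: S).
    by rewrite finset.subsetIr hT.
  rewrite /= finset.disjoints_subset; apply/fintype.subsetP => e eE.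
  rewrite !inE; apply/negP => /andP[_ eU].
  move/forall_inP: indT => /(_ e eE) /negP; apply.
  by apply: fintype.subset_trans eU (finset.subsetIl _ _).
rewrite (eq_bigr (fun U : {set 'I_n} => (1 - p) ^+ 'C(#|U|, r'.+1))); last first.
  move=> U _; rewrite hprob_disj ?card_F //.
  by apply/fintype.subsetP => e; rewrite inE => /andP[].
set B := expR (- (K * ln d * (w * n%:R))).
apply: le_trans (_ : \sum_(U : {set 'I_n} | (U \subset S) && (eps * w * n%:R <= #|U|%:R)) B <= _).
  apply: ler_sum => U /andP[_ hU].
  apply: le_trans (_ : expR (- p) ^+ 'C(#|U|, r'.+1) <= _).
    have q0 : 0 <= 1 - p by rewrite subr_ge0.
    apply: lerXn2r; [exact: q0 | exact: expR_ge0 | exact: expR_ge1Dx].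
  rewrite -expRM_natl ler_expR mulrN lerN2 [X in _ <= X]mulrC.
  by apply: (key_bound R d eps w K n #|U| r' d0 e0 w0 n0 erefl lnE Cn0 hCn hw2 hU).
have -> : \sum_(U : {set 'I_n} | (U \subset S) && (eps * w * n%:R <= #|U|%:R)) B
    = B *+ #|[set U : {set 'I_n} | (U \subset S) && (eps * w * n%:R <= #|U|%:R)%R]|.
  by rewrite -sumr_const; apply: eq_bigl => U; rewrite inE.
have hcard : (#|[set U : {set 'I_n} | (U \subset S) && (eps * w * n%:R <= #|U|%:R)%R]|
    <= 2 ^ #|S|)%N.
  rewrite -card_powerset; apply: subset_leq_card; apply/fintype.subsetP => U.
  by rewrite !inE ?powersetE => /andP[].
apply: le_trans (ler_wpMn2l (expR_ge0 _) hcard) _.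
rewrite -[X in X <= _]mulr_natl natrX.
have h2 : 2%:R ^+ #|S| <= expR (a * w * n%:R) :> R.
  apply: le_trans (_ : expR 1 ^+ #|S| <= _).
    apply: lerXn2r; [exact: ler0n | exact: expR_ge0 | exact: expR_ge1Dx].
  by rewrite -expRM_natl mulr1 ler_expR.
apply: le_trans (ler_wpM2r (expR_ge0 _) h2) _.
rewrite -expRD ler_expR.
have hK : a + 1 <= ln d * K by rewrite -ler_pdivrMr.
have wn : 0 <= w * n%:R by rewrite mulr_ge0 ?ler0n // ltW.
have := mulr_ge0 wn (_ : 0 <= ln d * K - (a + 1)); rewrite subr_ge0 => /(_ hK) h.
nra.
Qed.
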